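(* Let $g$, $\mathbf{g}=g^{\oplus n}$ be as in the context, and let $\mathbf{A},\mathbf{B},\mathbf{C},\mathbf{D}$ be linear operators on $\mathbf{g}$ with components $A_{ij},B_{ij},C_{ij},D_{ij}$ such that $A_{ij}^*=-A_{ji}$, $D_{ij}^*=-D_{ji}$, $B_{ij}^*=C_{ji}$ and such that PB$(\mathbf{A},\mathbf{B},\mathbf{C},\mathbf{D})$ is a Poisson bracket on $\mathbf{g}$. Let $\varphi$ be a smooth Ad-invariant function on $g$ and $\Phi(\mathbf{u})=\varphi(u_n\cdots u_1)$. For $1\le j\le n$ put $T_j=u_j\cdots u_1\cdot u_n\cdots u_{j+1}$ (so $T_n=u_n\cdots u_1$). Then the Hamiltonian equations of motion on $\mathbf{g}$ generated by $\Phi$ are $\dot u_i=u_i\,\mathcal{R}_i-\mathcal{L}_i\,u_i$, $i=1,\dots,n$, where $\mathcal{R}_i=\sum_{j=1}^n\big(A_{i,j+1}+B_{i,j}\big)\big(d\varphi(T_j)\big)$ and $\mathcal{L}_i=\sum_{j=1}^n\big(D_{i,j}+C_{i,j+1}\big)\big(d\varphi(T_j)\big)$, with subscripts taken mod $n$ (so $A_{i,n+1}=A_{i,1}$, $C_{i,n+1}=C_{i,1}$).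
   Context: $g$ is an associative algebra with a nondegenerate symmetric bilinear form $\langle\cdot,\cdot\rangle$ with $\langle uv,w\rangle=\langle u,vw\rangle$; $X^*$ denotes the adjoint of a linear operator $X$ on $g$. For smooth $\varphi$ on $g$, $\nabla\varphi(u)$ is defined by $\langle\nabla\varphi(u),X\rangle=\frac{d}{d\varepsilon}\varphi(u+\varepsilon X)|_{\varepsilon=0}$, $d\varphi(u)=u\nabla\varphi(u)$, $d'\varphi(u)=\nabla\varphi(u)u$. $\varphi$ is Ad-invariant if $\varphi(huh^{-1})=\varphi(u)$ for invertible $h$ (equivalently $d\varphi=d'\varphi$). $\mathbf{g}=g\oplus\cdots\oplus g$ ($n$ copies), componentwise multiplication, form $\langle\langle\mathbf{u},\mathbf{v}\rangle\rangle=\sum_k\langle u_k,v_k\rangle$. Components of an operator: $(\mathbf{A}(\mathbf{u}))_i=\sum_j A_{ij}(u_j)$. For smooth $\Phi$ on $\mathbf{g}$, $\nabla_j\Phi$ is the $j$-th component of its gradient, $d_j\Phi=u_j\nabla_j\Phi$, $d'_j\Phi=\nabla_j\Phi\,u_j$, and PB$(\mathbf{A},\mathbf{B},\mathbf{C},\mathbf{D})$ is $\{\Phi,\Psi\}(\mathbf{u})=\sum_{i,j}\big(\langle A_{ij}(d'_j\Phi),d'_i\Psi\rangle-\langle D_{ij}(d_j\Phi),d_i\Psi\rangle+\langle B_{ij}(d_j\Phi),d'_i\Psi\rangle-\langle C_{ij}(d'_j\Phi),d_i\Psi\rangle\big)$. The Hamiltonian equations generated by $\Phi$ are the equations $\frac{d}{dt}\ell(\mathbf{u})=\{\Phi,\ell\}(\mathbf{u})$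 for all linear functions $\ell$ on $\mathbf{g}$. *)

(* Defs.v *)
From HB Require Import structures.
From mathcomp Require Import all_boot all_order all_algebra all_field.
From mathcomp Require Import all_classical all_reals all_analysis.
Set Implicit Arguments. Unset Strict Implicit. Unset Printing Implicit Defensive.
Import Order.TTheory GRing.Theory Num.Theory.
Import numFieldNormedType.Exports.
Local Open Scope ring_scope.
Local Open Scope classical_set_scope.

Section Defs.
Variable R : realType.

(* A finite dimensional real vector space V carries its canonical topology,   *)
(* transported from R^(dim V) by the coordinate isomorphism of a basis.     *)
Fixpoint Ck (m : nat) (k : nat) (F : 'rV[R]_m -> R) : Prop :=
  continuous F /\
  match k with
  | 0 => True
  | k'.+1 => forall v : 'rV[R]_m, (forall x, derivable F x v) /\ Ck k' ('D_v F)
  end.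

Definition smooth (V : vectType R) (f : V -> R) : Prop :=
  forall k, Ck k (fun r : 'rV[R]_(\dim {:V}) => f (\sum_(i < \dim {:V}) r 0 i *: (vbasis {:V})`_i)).

Variable g : falgType R.
Variable form : g -> g -> R.

Definition grad (phi : g -> R) (u : g) : g :=
  xget 0 [set G : g | forall X : g,
            is_derive (0 : R) 1 (fun e : R => phi (u + e *: X)) (form G X)].

Definition dphi (phi : g -> R) (u : g) : g := u * grad phi u.
Definition dphi' (phi : g -> R) (u : g) : g := grad phi u * u.

Definition Ad_invariant (phi : g -> R) : Prop :=
  forall h u : g, h \is a GRing.unit -> phi (h * u * h^-1) = phi u.

Variable n : nat.
Notation gn := {ffun 'I_n -> g}.

Definition gradn (Phi : gn -> R) (u : gn) : gn :=
  xget 0 [set G : gn | forall X : gn,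
            is_derive (0 : R) 1 (fun e : R => Phi (u + e *: X))
                      (\sum_(k < n) form (G k) (X k))].

Definition dj (Phi : gn -> R) (u : gn) (j : 'I_n) : g := u j * gradn Phi u j.
Definition dj' (Phi : gn -> R) (u : gn) (j : 'I_n) : g := gradn Phi u j * u j.

Definition PB (A B C D : 'I_n -> 'I_n -> 'End(g)) (Phi Psi : gn -> R) (u : gn)
  : R :=
  \sum_(i < n) \sum_(j < n)
    (  form (A i j (dj' Phi u j)) (dj' Psi u i)
     - form (D i j (dj Phi u j)) (dj Psi u i)
     + form (B i j (dj Phi u j)) (dj' Psi u i)
     - form (C i j (dj' Phi u j)) (dj Psi u i)).

(* PB is a Poisson bracket: (bilinearity and Leibniz rule hold by the form of *)
(* the bracket) skew-symmetry and Jacobi identity on smooth functions.        *)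
Definition is_Poisson (A B C D : 'I_n -> 'I_n -> 'End(g)) : Prop :=
  forall F G H : gn -> R, smooth F -> smooth G -> smooth H ->
    (forall u, PB A B C D F G u = - PB A B C D G F u) /\
    (forall u, PB A B C D F (PB A B C D G H) u
             + PB A B C D G (PB A B C D H F) u
             + PB A B C D H (PB A B C D F G) u = 0).

(* u_n ... u_1  (0-based: u_{n-1} ... u_0) *)
Definition prod_all (u : gn) : g := \prod_(k < n) u (rev_ord k).

(* T_j = u_j ... u_1 . u_n ... u_{j+1} = product of u_{j-k mod n}, k = 0..n-1 *)
Definition Tj (u : gn) (j : 'I_n) : g := \prod_(k < n) u (iter k (@ord_pred n) j).

End Defs.

(* Main.v *)
Require Import Defs.
From HB Require Import structures.
From mathcomp Require Import all_boot all_order all_algebra all_field.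
From mathcomp Require Import all_classical all_reals all_analysis.
From mathcomp Require Import zify.
From Stdlib Require Import Lia.
Import Order.TTheory GRing.Theory Num.Theory.
Import numFieldNormedType.Exports.
Local Open Scope ring_scope.
Local Open Scope classical_set_scope.

Lemma cvg_bigsum (R : realType) (T : Type) (Fl : set_system T) {FF : Filter Fl}
  (V : normedModType R) (I : Type) (r : seq I) (f : I -> T -> V) (l : I -> V) :
  (forall i, f i x @[x --> Fl] --> l i) ->
  (\sum_(i <- r) f i x) @[x --> Fl] --> \sum_(i <- r) l i.
Proof.
move=> H; elim: r => [|i r IH].
  rewrite big_nil (_ : (fun x => _) = (fun=> 0)); first exact: cvg_cst.
  by apply/funext => x; rewrite big_nil.
rewrite big_cons (_ : (fun x => _) = (fun x => f i x + \sum_(j <- r) f j x)).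
  exact: cvgD.
by apply/funext => x; rewrite big_cons.
Qed.

Lemma cvg_bigsumP (R : realType) (T : Type) (Fl : set_system T) {FF : Filter Fl}
  (V : normedModType R) (I : Type) (r : seq I) (P : pred I) (f : I -> T -> V) (l : I -> V) :
  (forall i, f i x @[x --> Fl] --> l i) ->
  (\sum_(i <- r | P i) f i x) @[x --> Fl] --> \sum_(i <- r | P i) l i.
Proof.
move=> H; rewrite big_mkcond (_ : (fun x => _) = (fun x => \sum_(i <- r) (if P i then f i x else 0))).
  apply: cvg_bigsum => i; case: (P i) => //; exact: cvg_cst.
by apply/funext => x; rewrite big_mkcond.
Qed.

Section Analytic.
Variables (R : realType) (m : nat) (F : 'rV[R]_m -> R).
Hypotheses (Fc : continuous F) (Fd : forall x v, derivable F x v)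
  (Fdc : forall v, continuous ('D_v F)).

Lemma line_derive (y w : 'rV[R]_m) (r : R) :
  is_derive r 1 (fun s : R => F (s *: w + y)) ('D_w F (r *: w + y)).
Proof.
have E : (fun t : R => t^-1 *: (((fun s : R => F (s *: w + y)) \o shift r) (t *: 1)
             - F (r *: w + y))) =
         (fun t : R => t^-1 *: ((F \o shift (r *: w + y)) (t *: w) - F (r *: w + y))).
  apply/funext => t /=; congr (_ *: (F _ - _)).
  by rewrite [_%:A]mulr1 scalerDl addrA.
split; first by rewrite /derivable E; exact: Fd.
by rewrite /derive E.
Qed.

Lemma line_cont (y w : 'rV[R]_m) : continuous (fun s : R => F (s *: w + y)).
Proof.
move=> r; apply: (@continuous_comp _ _ _ (fun s : R => s *: w + y) F).
  apply: cvgD; last exact: cvg_cst.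
  by apply: cvgZl; exact: cvg_id.
exact: Fc.
Qed.

Lemma MVTq (y w : 'rV[R]_m) (s : R) :
  exists t, `|t| <= `|s| /\ F (s *: w + y) - F y = s * 'D_w F (t *: w + y).
Proof.
have hd := line_derive y w; have hc := line_cont y w.
have H0 : F (0 *: w + y) = F y by rewrite scale0r add0r.
case: (lerP 0 s) => s0.
  have [c cin E] := MVT_segment s0 (fun x _ => hd x) (continuous_subspaceT hc).
  exists c; split; last by rewrite -H0 E subr0 mulrC.
  move: cin; rewrite in_itv /= => /andP[c0 cs].
  by rewrite !ger0_norm // (le_trans c0 cs).
have [c cin E] := MVT_segment (ltW s0) (fun x _ => hd x) (continuous_subspaceT hc).
exists c; split.
  move: cin; rewrite in_itv /= => /andP[sc c0].
  rewrite !ler0_norm ?(ltW s0) //; by rewrite lerN2.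
by rewrite -H0 -opprB E sub0r mulrN opprK mulrC.
Qed.

Lemma GL (x w : 'rV[R]_m) (y : R -> 'rV[R]_m) (c : R -> R) (cc : R) :
  y e @[e --> 0^'] --> x -> c e @[e --> 0^'] --> cc ->
  (e^-1 * (F ((e * c e) *: w + y e) - F (y e))) @[e --> 0^'] --> cc * 'D_w F x.
Proof.
move=> ycv ccv.
have /choice [t Ht] : forall e, exists t, `|t| <= `|e * c e| /\
   F ((e * c e) *: w + y e) - F (y e) = (e * c e) * 'D_w F (t *: w + y e).
  by move=> e; exact: MVTq.
have ec0 : (e * c e) @[e --> 0^'] --> 0.
  have H : (e * c e) @[e --> 0^'] --> 0 * cc.
    apply: cvgM => //; exact: nbhs_dnbhs.
  by rewrite mul0r in H.
have t0 : t e @[e --> 0^'] --> 0.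
  apply/cvgr0Pnorm_le => eps eps0.
  near=> e; apply: le_trans (Ht e).1 _.
  near: e; exact: cvgr0_norm_le.
apply: (@cvg_trans _ ((fun e => c e * 'D_w F (t e *: w + y e)) @ 0^')).
  apply: near_eq_cvg; near=> e.
  have e0 : e != 0 by near: e; exact: nbhs_dnbhs_neq.
  by rewrite (Ht e).2 mulrA mulrA mulVf ?mul1r.
apply: cvgM => //.
apply: (cvg_comp (fun e => t e *: w + y e) ('D_w F)); last exact: Fdc.
rewrite -[x]add0r -(scale0r w); apply: cvgD => //; exact: cvgZl.
Unshelve. all: by end_near.
Qed.

Lemma entry_cvg (w : R -> 'rV[R]_m) (w0 : 'rV[R]_m) k :
  w e @[e --> 0^'] --> w0 -> w e 0 k @[e --> 0^'] --> w0 0 k.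
Proof.
move=> H; apply: (cvg_comp w (fun M : 'rV[R]_m => M 0 k) H).
exact: coord_continuous.
Qed.

Lemma sum_lt_S (G : 'I_m -> 'rV[R]_m) (k : 'I_m) :
  \sum_(i < m | (i < k.+1)%N) G i = G k + \sum_(i < m | (i < k)%N) G i.
Proof.
rewrite (bigD1 k) //=; congr (_ + _); apply: eq_bigl => i.
by rewrite ltnS ltn_neqAle andbC.
Qed.

Lemma CL (x : 'rV[R]_m) (w : R -> 'rV[R]_m) (w0 : 'rV[R]_m) :
  w e @[e --> 0^'] --> w0 ->
  (e^-1 * (F (e *: w e + x) - F x)) @[e --> 0^'] -->
    \sum_(k < m) w0 0 k * 'D_('e_k) F x.
Proof.
move=> wcv.
pose s (j : nat) (e : R) := \sum_(i < m | (i < j)%N) (e * w e 0 i) *: ('e_i : 'rV[R]_m).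
have sm e : s m e = e *: w e.
  rewrite /s {2}(row_sum_delta (w e)) scaler_sumr.
  by apply: eq_big => // i; [rewrite ltn_ord | move=> _; rewrite scalerA].
have s0 e : s 0%N e = 0 by rewrite /s big_pred0.
have E : forall e, e^-1 * (F (e *: w e + x) - F x) =
   \sum_(k < m) e^-1 * (F ((e * w e 0 k) *: 'e_k + (s k e + x)) - F (s k e + x)).
  move=> e; rewrite -mulr_sumr; congr (_ * _).
  rewrite -sm -{2}(add0r x) -(s0 e).
  rewrite -(telescope_sumr (fun j => F (s j e + x)) (leq0n m)) big_mkord.
  apply: eq_bigr => k _; congr (F _ - _).
  by rewrite /s sum_lt_S addrA.
rewrite (_ : (fun e => _) = (fun e => \sum_(k < m) e^-1 *
     (F ((e * w e 0 k) *: 'e_k + (s k e + x)) - F (s k e + x)))); last first.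
  by apply/funext => e; rewrite E.
apply: cvg_bigsum => k.
apply: GL; last exact: entry_cvg.
rewrite -{2}(add0r x); apply: cvgD; last exact: cvg_cst.
have -> : s k = fun e => e *: \sum_(i < m | (i < k)%N) w e 0 i *: ('e_i : 'rV[R]_m).
  apply/funext => e; rewrite /s scaler_sumr; apply: eq_bigr => i _.
  by rewrite scalerA.
have H : (e *: \sum_(i < m | (i < k)%N) w e 0 i *: ('e_i : 'rV[R]_m)) @[e --> 0^'] -->
   0 *: \sum_(i < m | (i < k)%N) w0 0 i *: ('e_i : 'rV[R]_m).
  apply: cvgZ; first exact: nbhs_dnbhs.
  apply: cvg_bigsumP => i; apply: cvgZl; exact: entry_cvg.
by rewrite scale0r in H.
Qed.

Lemma Lin (x v : 'rV[R]_m) : 'D_v F x = \sum_(k < m) v 0 k * 'D_('e_k) F x.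
Proof.
have H : (e^-1 * (F (e *: v + x) - F x)) @[e --> 0^'] --> \sum_(k < m) v 0 k * 'D_('e_k) F x.
  by apply: (@CL x (fun _ => v) v); exact: cvg_cst.
have H2 : (e^-1 * (F (e *: v + x) - F x)) @[e --> 0^'] --> 'D_v F x.
  have := Fd x v; rewrite /derivable => /cvg_ex [l Hl].
  by rewrite /derive; rewrite (cvg_lim _ Hl).
exact: (cvg_unique _ H2 H).
Qed.

Lemma CL' (x : 'rV[R]_m) (w : R -> 'rV[R]_m) (w0 : 'rV[R]_m) :
  w e @[e --> 0^'] --> w0 ->
  (e^-1 * (F (e *: w e + x) - F x)) @[e --> 0^'] --> 'D_w0 F x.
Proof. by move=> H; rewrite Lin; exact: CL. Qed.

End Analytic.

Section Alg.
Variables (R : realType) (g : falgType R) (form : g -> g -> R).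
Hypotheses (form_linl : forall (a : R) (u1 u2 v : g),
      form (a *: u1 + u2) v = a * form u1 v + form u2 v)
  (form_sym : forall u v : g, form u v = form v u)
  (form_nondeg : forall u : g, (forall v : g, form u v = 0) -> u = 0)
  (form_inv : forall u v w : g, form (u * v) w = form u (v * w)).

Definition linR {V : lmodType R} (f : V -> R) :=
  forall a x y, f (a *: x + y) = a * f x + f y.

Lemma linR0 {V : lmodType R} (f : V -> R) : linR f -> f 0 = 0.
Proof.
move=> fl; have := fl 1 0 0; rewrite scale1r mul1r addr0 => H.
by have := congr1 (fun t => t - f 0) H; rewrite subrr addrK.
Qed.

Lemma linRD {V : lmodType R} (f : V -> R) : linR f -> forall x y, f (x + y) = f x + f y.
Proof. by move=> fl x y; rewrite -[x]scale1r fl mul1r scale1r. Qed.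

Lemma linRZ {V : lmodType R} (f : V -> R) : linR f -> forall a x, f (a *: x) = a * f x.
Proof. by move=> fl a x; rewrite -[a *: x]addr0 fl linR0 ?addr0. Qed.

Lemma linRN {V : lmodType R} (f : V -> R) : linR f -> forall x, f (- x) = - f x.
Proof. by move=> fl x; rewrite -scaleN1r linRZ // mulN1r. Qed.

Lemma linR_sum {V : lmodType R} (f : V -> R) (I : Type) (r : seq I) (P : pred I) (F : I -> V) :
  linR f -> f (\sum_(i <- r | P i) F i) = \sum_(i <- r | P i) f (F i).
Proof.
move=> fl; apply: (big_rec2 (fun y1 y2 => f y1 = y2)); first exact: linR0.
by move=> i y1 y2 _ <-; rewrite linRD.
Qed.

Lemma linR_forml v : linR (fun u => form u v).
Proof. by move=> a x y; rewrite form_linl. Qed.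

Lemma linR_formr u : linR (form u).
Proof. by move=> a x y; rewrite !(form_sym u) form_linl. Qed.

Notation m := (\dim {:g}).
Notation bs := (vbasis {:g}).

Definition gv (r : 'rV[R]_m) : g := \sum_(i < m) r 0 i *: bs`_i.
Definition rv (x : g) : 'rV[R]_m := \row_(i < m) coord bs i x.

Lemma gvK x : gv (rv x) = x.
Proof.
rewrite /gv (eq_bigr (fun i => coord bs i x *: bs`_i)); last by move=> i _; rewrite mxE.
by rewrite -coord_vbasis ?memvf.
Qed.

Lemma rvK r : rv (gv r) = r.
Proof.
apply/rowP => i; rewrite mxE /gv linear_sum /=.
rewrite (eq_bigr (fun j => r 0 j * (j == i)%:R)); last first.
  by move=> j _; rewrite linearZ /= coord_free // (basis_free (vbasisP fullv)).
rewrite (bigD1 i) //= eqxx mulr1 big1 ?addr0 // => j /negbTE ->.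
by rewrite mulr0.
Qed.

Lemma rvD x y : rv (x + y) = rv x + rv y.
Proof. by apply/rowP => i; rewrite !mxE linearD. Qed.

Lemma rvZ a x : rv (a *: x) = a *: rv x.
Proof. by apply/rowP => i; rewrite !mxE linearZ. Qed.

Lemma rv0 : rv 0 = 0.
Proof. by apply/rowP => i; rewrite !mxE linear0. Qed.

Lemma linR_gv (f : g -> R) r : linR f -> f (gv r) = \sum_(i < m) r 0 i * f bs`_i.
Proof. by move=> fl; rewrite /gv linR_sum //; apply: eq_bigr => i _; rewrite linRZ. Qed.

Lemma riesz {f : g -> R} : linR f -> exists G, forall X, form G X = f X.
Proof.
move=> fl.
pose Gram : 'M[R]_m := \matrix_(i, j) form bs`_i bs`_j.
have formGram r (j : 'I_m) : form (gv r) bs`_j = (r *m Gram) 0 j.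
  rewrite (linR_gv _ _ (linR_forml _)) !mxE; apply: eq_bigr => i _.
  by rewrite mxE.
have ext G : (forall j : 'I_m, form G bs`_j = f bs`_j) -> forall X, form G X = f X.
  move=> H X; rewrite -(gvK X) (linR_gv _ _ (linR_formr _)) (linR_gv _ _ fl).
  by apply: eq_bigr => i _; rewrite H.
have Gu : Gram \in unitmx.
  rewrite -row_free_unit -kermx_eq0; apply/eqP/row_matrixP => i.
  rewrite row0; set r := row i _.
  have rG : r *m Gram = 0 by rewrite -row_mul mulmx_ker row0.
  have : gv r = 0.
    apply: form_nondeg => v; rewrite -(gvK v) (linR_gv _ _ (linR_formr _)).
    by rewrite big1 // => k _; rewrite formGram rG !mxE mulr0.
  by move=> /(congr1 rv); rewrite rvK rv0.
pose fv : 'rV[R]_m := \row_j f bs`_j.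
exists (gv (fv *m invmx Gram)); apply: ext => j.
by rewrite formGram mulmxKV // mxE.
Qed.

Lemma form_eq G1 G2 : (forall X, form G1 X = form G2 X) -> G1 = G2.
Proof.
move=> H; apply/eqP; rewrite -subr_eq0; apply/eqP/form_nondeg => v.
have := linRD _ (linR_forml v) G1 (- G2); have := linRN _ (linR_forml v) G2.
by move=> /= -> ->; rewrite H subrr.
Qed.


Lemma is_derive0 (f : R -> R) l :
  (e^-1 * (f e - f 0)) @[e --> 0^'] --> l -> is_derive (0:R) (1:R) f l.
Proof.
move=> H.
have E : (fun h : R => h^-1 *: ((f \o shift 0) (h *: 1) - f 0)) =
         (fun e => e^-1 * (f e - f 0)).
  by apply/funext => h /=; rewrite [_%:A]mulr1 addr0.
split; first by rewrite /derivable E; exact: cvgP H.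
by rewrite /derive E; exact: cvg_lim.
Qed.

Lemma is_derive_uniq {f : R -> R} {a b : R} : is_derive (0:R) (1:R) f a -> is_derive (0:R) (1:R) f b -> a = b.
Proof. by case=> _ <- [_ <-]. Qed.

Lemma gv0 : gv 0 = 0.
Proof. by rewrite /gv big1 // => i _; rewrite mxE scale0r. Qed.

Lemma rv_sum (I : Type) (r : seq I) (P : pred I) (F : I -> g) :
  rv (\sum_(i <- r | P i) F i) = \sum_(i <- r | P i) rv (F i).
Proof. exact: (big_morph rv rvD rv0). Qed.

Lemma rv_mul x y : rv (x * y) =
  \sum_(i < m) \sum_(j < m) (rv x 0 i * rv y 0 j) *: rv (bs`_i * bs`_j).
Proof.
rewrite -{1}(gvK x) -{1}(gvK y) /gv mulr_suml rv_sum; apply: eq_bigr => i _.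
rewrite mulr_sumr rv_sum; apply: eq_bigr => j _.
by rewrite -scalerAl -scalerAr scalerA rvZ.
Qed.

Lemma mul_cvg (a b : R -> g) a0 b0 :
  rv (a e) @[e --> 0^'] --> rv a0 -> rv (b e) @[e --> 0^'] --> rv b0 ->
  rv (a e * b e) @[e --> 0^'] --> rv (a0 * b0).
Proof.
move=> ha hb; rewrite rv_mul (_ : (fun e => _) = (fun e =>
  \sum_(i < m) \sum_(j < m) (rv (a e) 0 i * rv (b e) 0 j) *: rv (bs`_i * bs`_j))).
  apply: cvg_bigsum => i; apply: cvg_bigsum => j; apply: cvgZl.
  by apply: cvgM; apply: entry_cvg.
by apply/funext => e; rewrite rv_mul.
Qed.

Definition Curve (c : R -> g) (c0 c1 : g) := exists w : R -> g,
  (forall e, c e = c0 + e *: w e) /\ rv (w e) @[e --> 0^'] --> rv c1.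

Lemma Curve_val {c c0 c1} : Curve c c0 c1 -> rv (c e) @[e --> 0^'] --> rv c0.
Proof.
case=> w [cE wcv]; rewrite (_ : (fun e => _) = (fun e => rv c0 + e *: rv (w e))).
  have H : (rv c0 + e *: rv (w e)) @[e --> 0^'] --> rv c0 + 0 *: rv c1.
    apply: cvgD; first exact: cvg_cst.
    by apply: cvgZ => //; exact: nbhs_dnbhs.
  by rewrite scale0r addr0 in H.
by apply/funext => e; rewrite cE rvD rvZ.
Qed.

Lemma Curve_cst (x : g) : Curve (fun _ => x) x 0.
Proof. by exists (fun _ => 0); split => [e|]; [rewrite scaler0 addr0 | exact: cvg_cst]. Qed.

Lemma Curve_line (x X : g) : Curve (fun e => x + e *: X) x X.
Proof. by exists (fun _ => X); split => //; exact: cvg_cst. Qed.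

Lemma Curve_eq1 {c c0 c1 c1'} : c1 = c1' -> Curve c c0 c1 -> Curve c c0 c1'.
Proof. by move=> ->. Qed.

Lemma Curve_mul {c c0 c1 d d0 d1} : Curve c c0 c1 -> Curve d d0 d1 ->
  Curve (fun e => c e * d e) (c0 * d0) (c1 * d0 + c0 * d1).
Proof.
move=> Cc Cd; have dv := Curve_val Cd.
case: Cc => w [cE wcv]; case: Cd => z [dE zcv].
exists (fun e => w e * d e + c0 * z e); split.
  move=> e; rewrite cE mulrDl {1}dE mulrDr -scalerAl -scalerAr scalerDr.
  by rewrite -addrA [X in _ + X]addrC.
rewrite rvD (_ : (fun e => _) = (fun e => rv (w e * d e) + rv (c0 * z e))).
  apply: cvgD; apply: mul_cvg => //; exact: cvg_cst.
by apply/funext => e; rewrite rvD.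
Qed.

Fixpoint DpL (U : nat -> g) (a l : nat) : g :=
  if l is l'.+1 then U (a + l')%N * DpL U a l' else 1.

Lemma DpL_split U a l1 l2 : DpL U a (l1 + l2) = DpL U (a + l1) l2 * DpL U a l1.
Proof.
elim: l2 => [|l2 IH]; first by rewrite addn0 /= mul1r.
by rewrite addnS /= IH mulrA addnA.
Qed.

Lemma DpL1 U a : DpL U a 1 = U a.
Proof. by rewrite /= addn0 mulr1. Qed.

Lemma Curve_DpL (U X : nat -> g) a l :
  Curve (fun e => DpL (fun i => U i + e *: X i) a l) (DpL U a l)
    (\sum_(k < l) DpL U (a + k.+1) (l - k.+1) * X (a + k)%N * DpL U a k).
Proof.
elim: l => [|l IH].
  by apply: Curve_eq1 (Curve_cst _); rewrite big_ord0.
have := Curve_mul (Curve_line (U (a + l)%N) (X (a + l)%N)) IH.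
apply: Curve_eq1.
rewrite big_ord_recr /= subnn /= mul1r addrC; congr (_ + _).
rewrite mulr_sumr; apply: eq_bigr => k _.
have kl : (k < l)%N := ltn_ord k.
rewrite subSS -(subnSK kl) /= !mulrA; congr (U _ * _ * _ * _).
lia.
Qed.


Section PhiSec.
Variable phi : g -> R.
Hypotheses (phi_smooth : smooth phi) (phi_Ad : Ad_invariant phi).

Definition Fphi (r : 'rV[R]_m) : R := phi (gv r).

Lemma phiF x : phi x = Fphi (rv x).
Proof. by rewrite /Fphi gvK. Qed.

Lemma Fphi_props : continuous Fphi /\ (forall x v, derivable Fphi x v) /\
  (forall v, continuous ('D_v Fphi)).
Proof.
have := phi_smooth 1%N => /= [[Fc Hd]].
split; first exact: Fc.
by split; [move=> x v; exact: (Hd v).1 | move=> v; exact: (Hd v).2.1].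
Qed.

Lemma chain {c c0 c1} : Curve c c0 c1 ->
  is_derive (0:R) (1:R) (fun e => phi (c e)) ('D_(rv c1) Fphi (rv c0)).
Proof.
have [Fc [Fd Fdc]] := Fphi_props.
move=> Cc; have c00 : c 0 = c0 by case: Cc => w [cE _]; rewrite cE scale0r addr0.
case: Cc => w [cE wcv]; apply: is_derive0; rewrite c00.
rewrite (_ : (fun e => _) = (fun e => e^-1 * (Fphi (e *: rv (w e) + rv c0) - Fphi (rv c0)))).
  exact: (@CL' _ _ _ Fc Fd Fdc (rv c0) (fun e => rv (w e)) (rv c1)).
by apply/funext => e; rewrite cE !phiF rvD rvZ (addrC (rv c0)).
Qed.

Lemma linD x : linR (fun Y => 'D_(rv Y) Fphi (rv x)).
Proof.
have [Fc [Fd Fdc]] := Fphi_props.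
move=> a X Y; rewrite !(Lin _ _ _ Fc Fd Fdc) rvD rvZ mulr_sumr -big_split.
by apply: eq_bigr => k _; rewrite !mxE mulrDl mulrA.
Qed.

Lemma grad_spec x Y : form (grad form phi x) Y = 'D_(rv Y) Fphi (rv x).
Proof.
have [G HG] := riesz (linD x).
suff -> : grad form phi x = G by rewrite HG.
apply: xget_unique.
  move=> X; rewrite HG; exact: (chain (Curve_line x X)).
move=> y Hy; apply: form_eq => X; rewrite HG.
exact: (is_derive_uniq (Hy X) (chain (Curve_line x X))).
Qed.

Lemma grad_curve {c c0 c1} : Curve c c0 c1 ->
  is_derive (0:R) (1:R) (fun e => phi (c e)) (form (grad form phi c0) c1).
Proof. by rewrite grad_spec; exact: chain. Qed.

Lemma grad_line x X :
  is_derive (0:R) (1:R) (fun e => phi (x + e *: X)) (form (grad form phi x) X).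
Proof. exact: (grad_curve (Curve_line x X)). Qed.

Lemma small_nonroot {p : {poly R}} : p != 0 -> forall d : R, 0 < d ->
  exists t : R, 0 < t < d /\ ~~ root p t.
Proof.
move=> pnz d d0; apply: contrapT => H.
have Hr : forall t, 0 < t < d -> root p t.
  by move=> t ht; apply/negPn/negP => nr; apply: H; exists t.
pose rs := [seq d / (k.+2)%:R | k <- iota 0 (size p)].
have : (size rs < size p)%N.
  apply: max_poly_roots => //.
    apply/allP => x /mapP [k _ ->]; apply: Hr; apply/andP; split.
      by apply: divr_gt0 => //; rewrite ltr0n.
    by rewrite ltr_pdivrMr ?ltr0n // ltr_pMr // ltr1n.
  rewrite map_inj_uniq ?iota_uniq // => x y /(mulfI (lt0r_neq0 d0)) /invr_inj /eqP.
  by rewrite eqr_nat => /eqP [].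
by rewrite size_map size_iota ltnn.
Qed.

Lemma phi_comm a b : phi (a * b) = phi (b * a).
Proof.
have [Fc [Fd Fdc]] := Fphi_props.
pose M : 'M[R]_m := \matrix_(i, j) coord bs j (a * bs`_i).
have rvM r : rv (a * gv r) = r *m M.
  apply/rowP => j; rewrite !mxE /gv mulr_sumr linear_sum; apply: eq_bigr => i _.
  by rewrite mxE -scalerAr linearZ.
have unit_t t : ~~ root (char_poly (- M)) t -> (a + t%:A) \is a GRing.unit.
  move=> nr.
  have inj x : (a + t%:A) * x = 0 -> x = 0.
    move=> hx.
    have ev : rv x *m (- M) = t *: rv x.
      move: (congr1 rv hx); rewrite mulrDl mulr_algl rvD rvZ rv0 -{1}(gvK x) rvM.
      by move/eqP; rewrite addr_eq0 => /eqP H; rewrite mulmxN H opprK.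
    apply/eqP; apply: contraNT nr => xn0.
    rewrite -eigenvalue_root_char; apply/eigenvalueP; exists (rv x) => //.
    by apply: contra xn0 => /eqP h; rewrite -(gvK x) h gv0.
  have kerh : lker (amull (a + t%:A)) == 0%VS.
    apply/lker0P => x y; rewrite !lfunE /= => hxy.
    by apply/eqP; rewrite -subr_eq0; apply/eqP/inj; rewrite mulrBr hxy subrr.
  set y := ((amull (a + t%:A))^-1)%VF 1.
  have hy : (a + t%:A) * y = 1 by have := lker0_lfunVK kerh 1; rewrite lfunE.
  apply/unitrP; exists y; split => //.
  apply/eqP; rewrite -subr_eq0; apply/eqP/inj.
  by rewrite mulrBr mulrA hy mul1r mulr1 subrr.
have pnz : char_poly (- M) != 0 := monic_neq0 (char_poly_monic _).
pose D t := phi ((a + t%:A) * b) - phi (b * (a + t%:A)).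
have DE t : D t = Fphi (t *: rv b + rv (a * b)) - Fphi (t *: rv b + rv (b * a)).
  by rewrite /D !phiF mulrDl mulrDr mulr_algl mulr_algr !rvD !rvZ !(addrC (t *: _)).
have Dz t : (a + t%:A) \is a GRing.unit -> D t = 0.
  move=> ut; apply/eqP; rewrite subr_eq0; apply/eqP.
  rewrite -{1}(mulrK ut ((a + t%:A) * b)) -(mulrA (a + t%:A) b) phi_Ad //.
have D0 : D 0 = phi (a * b) - phi (b * a) by rewrite /D scale0r addr0.
have Dc : D t @[t --> 0] --> D 0.
  rewrite (_ : D = fun t => Fphi (t *: rv b + rv (a * b)) - Fphi (t *: rv b + rv (b * a))).
    apply: cvgB; [exact: (line_cont _ _ _ Fc) | exact: (line_cont _ _ _ Fc)].
  by apply/funext => t; rewrite DE.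
apply/eqP; rewrite -subr_eq0 -D0; apply/eqP.
case: (eqVneq (D 0) 0) => // D0n.
have : \forall t \near 0, `|D 0 - D t| < `|D 0|.
  by apply: (cvgr_dist_lt _ _ Dc); rewrite normr_gt0.
move/nbhs_ballP => [d d0 Hd].
have [t [/andP[t0 td] nr]] := small_nonroot pnz d d0.
have : ball 0 d t by rewrite /ball /= sub0r normrN gtr0_norm.
by move/Hd; rewrite (Dz t (unit_t t nr)) subr0 ltxx.
Qed.

Lemma grad_swap a b : grad form phi (a * b) * a = a * grad form phi (b * a).
Proof.
apply: form_eq => Y.
have H1 := grad_line (a * b) (a * Y).
have H2 := grad_line (b * a) (Y * a).
have E : (fun e => phi (a * b + e *: (a * Y))) = (fun e => phi (b * a + e *: (Y * a))).
  by apply/funext => e; rewrite scalerAr -mulrDr phi_comm mulrDl -scalerAl.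
rewrite E in H1; have := is_derive_uniq H1 H2.
rewrite form_inv => ->.
by rewrite form_sym form_inv [RHS]form_sym.
Qed.

Lemma grad_comm x : grad form phi x * x = x * grad form phi x.
Proof. by have := grad_swap x 1; rewrite mulr1 mul1r. Qed.


Lemma DpL_big U a l : DpL U a l = \prod_(i < l) U (a + l.-1 - i)%N.
Proof.
elim: l => [|l IH]; first by rewrite big_ord0.
rewrite big_ord_recl /= subn0 IH; congr (_ * _).
apply: eq_bigr => i _; congr U; have := ltn_ord i; rewrite /bump /= -?subn1; lia.
Qed.

Lemma DpLS U a l : DpL U a l.+1 = U (a + l)%N * DpL U a l.
Proof. by []. Qed.

Lemma DpL0 U a : DpL U a 0 = 1.
Proof. by []. Qed.

Lemma form_cyc G a x b : form G (a * x * b) = form (b * G * a) x.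
Proof.
by rewrite form_sym form_inv form_sym -form_inv.
Qed.

Variable n : nat.
Notation gn := {ffun 'I_n -> g}.

Definition Unat (u : gn) (i : nat) : g :=
  match insub i with Some k => u k | None => 0 end.

Lemma UnatE (u : gn) (k : 'I_n) : Unat u k = u k.
Proof. by rewrite /Unat valK. Qed.

Lemma UnatDZ (u X : gn) (e : R) i : Unat (u + e *: X) i = Unat u i + e *: Unat X i.
Proof. by rewrite /Unat; case: insub => [k|]; rewrite ?ffunE ?scaler0 ?addr0. Qed.

Lemma prod_allE (u : gn) : prod_all u = DpL (Unat u) 0 n.
Proof.
rewrite DpL_big /prod_all; apply: eq_bigr => k _; rewrite -UnatE.
congr (Unat u _); rewrite /=; have := ltn_ord k; lia.
Qed.

Lemma iter_pred (j : 'I_n) i : (i < n)%N ->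
  nat_of_ord (iter i (@ord_pred n) j) = if (i <= j)%N then (j - i)%N else (n + j - i)%N.
Proof.
have jn := ltn_ord j.
elim: i => [|i IH] lt; first by rewrite /= ?leq0n subn0.
rewrite iterS /= IH ?(ltnW lt) // -subn1.
case: (leqP i j) => h1; case: (leqP i.+1 j) => h2.
- rewrite (_ : (j - i + n - 1 = (j - i.+1) + n)%N); last by lia.
  by rewrite modnDr modn_small //; lia.
- rewrite (_ : (j - i + n - 1 = n + j - i.+1)%N); last by lia.
  by rewrite modn_small //; lia.
- lia.
- rewrite (_ : (n + j - i + n - 1 = (n + j - i.+1) + n)%N); last by lia.
  by rewrite modnDr modn_small //; lia.
Qed.

Lemma TjE (u : gn) (j : 'I_n) :
  Tj u j = DpL (Unat u) 0 j.+1 * DpL (Unat u) j.+1 (n - j.+1).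
Proof.
have jn := ltn_ord j.
rewrite /Tj -(big_mkord xpredT (fun i => u (iter i (@ord_pred n) j))).
rewrite (big_cat_nat (leq0n j.+1) jn); congr (_ * _).
  rewrite DpL_big big_mkord; apply: eq_bigr => i _.
  have hi : (i <= j)%N by rewrite -ltnS.
  rewrite -UnatE iter_pred ?hi; last by apply: leq_trans (ltn_ord i) jn.
  congr (Unat u _); lia.
rewrite DpL_big -{1}(add0n j.+1) big_addn big_mkord; apply: eq_bigr => i _.
have hi := ltn_ord i.
have h2 : ~~ (i + j.+1 <= j)%N by rewrite -ltnNge; lia.
rewrite -UnatE iter_pred ?(negbTE h2); last by lia.
congr (Unat u _); lia.
Qed.

Definition delta (k : 'I_n) (Y : g) : gn := [ffun j => if j == k then Y else 0].

Lemma sum_delta (G : gn) k Y : \sum_j form (G j) (delta k Y j) = form (G k) Y.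
Proof.
rewrite (bigD1 k) //= ffunE eqxx big1 ?addr0 // => j /negbTE jk.
by rewrite ffunE jk (linR0 _ (linR_formr _)).
Qed.

Lemma gn_eq (G1 G2 : gn) :
  (forall X : gn, \sum_k form (G1 k) (X k) = \sum_k form (G2 k) (X k)) -> G1 = G2.
Proof.
move=> H; apply/ffunP => k; apply: form_eq => Y.
by have := H (delta k Y); rewrite !sum_delta.
Qed.

Lemma riesz_n {l : gn -> R} : linR l ->
  exists G : gn, forall X : gn, \sum_k form (G k) (X k) = l X.
Proof.
move=> ll.
have /choice [Gf HG] : forall k : 'I_n, exists G, forall Y, form G Y = l (delta k Y).
  move=> k; apply: riesz => a x y; rewrite -ll; congr l.
  by apply/ffunP => j; rewrite !ffunE; case: (j == k); rewrite ?scaler0 ?addr0.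
exists [ffun k => Gf k] => X.
have XE : X = \sum_k delta k (X k).
  apply/ffunP => j; rewrite sum_ffunE (bigD1 j) //= ffunE eqxx big1 ?addr0 //.
  by move=> k /negbTE jk; rewrite ffunE eq_sym jk.
rewrite [in RHS]XE (@linR_sum _ _ _ _ _ _ ll); apply: eq_bigr => k _.
by rewrite ffunE HG.
Qed.

Lemma gradl (l : gn -> R) (u : gn) : linR l ->
  forall X : gn, \sum_k form (gradn form l u k) (X k) = l X.
Proof.
move=> ll; have [G HG] := riesz_n ll.
suff -> : gradn form l u = G by [].
have HD : forall X : gn, is_derive (0:R) (1:R) (fun e => l (u + e *: X)) (\sum_k form (G k) (X k)).
  move=> X; rewrite HG; apply: is_derive0.
  apply: (@cvg_trans _ ((fun _ : R => l X) @ 0^')); last exact: cvg_cst.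
  apply: near_eq_cvg; near=> e.
  have e0 : e != 0 by near: e; exact: nbhs_dnbhs_neq.
  by rewrite scale0r addr0 (addrC u) ll addrK mulrA mulVf ?mul1r.
apply: xget_unique; first exact: HD.
move=> y Hy; apply: gn_eq => X; exact: (is_derive_uniq (Hy X) (HD X)).
Unshelve. all: by end_near.
Qed.

Lemma gradPhi (u : gn) : gradn form (fun v : gn => phi (prod_all v)) u =
  [ffun k : 'I_n => DpL (Unat u) 0 k * grad form phi (prod_all u)
                    * DpL (Unat u) k.+1 (n - k.+1)].
Proof.
set G := [ffun k : 'I_n => _].
have HG : forall X : gn, is_derive (0:R) (1:R) (fun e => phi (prod_all (u + e *: X)))
                        (\sum_k form (G k) (X k)).
  move=> X.
  have E : (fun e => phi (prod_all (u + e *: X))) =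
           (fun e => phi (DpL (fun i => Unat u i + e *: Unat X i) 0 n)).
    apply/funext => e; rewrite prod_allE; congr (phi (DpL _ 0 n)).
    by apply/funext => i; exact: UnatDZ.
  rewrite E.
  have := grad_curve (Curve_DpL (Unat u) (Unat X) 0 n).
  suff -> : \sum_k form (G k) (X k) = form (grad form phi (DpL (Unat u) 0 n))
     (\sum_(k < n) DpL (Unat u) (0 + k.+1) (n - k.+1) * Unat X (0 + k) * DpL (Unat u) 0 k) by [].
  rewrite (@linR_sum _ _ _ _ _ _ (linR_formr _)); apply: eq_bigr => k _.
  by rewrite form_cyc ffunE prod_allE !add0n UnatE.
apply: xget_unique; first exact: HG.
move=> y Hy; apply: gn_eq => X; exact: (is_derive_uniq (Hy X) (HG X)).
Qed.

Lemma dj_Phi (u : gn) (j : 'I_n) :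
  dj form (fun v : gn => phi (prod_all v)) u j = dphi form phi (Tj u j).
Proof.
have jn := ltn_ord j.
rewrite /dj gradPhi ffunE /dphi TjE.
set L := DpL (Unat u) j.+1 (n - j.+1).
have hQ : DpL (Unat u) 0 j.+1 = u j * DpL (Unat u) 0 j by rewrite DpLS add0n UnatE.
have hP : prod_all u = L * DpL (Unat u) 0 j.+1.
  by rewrite prod_allE -{1}(subnKC jn) DpL_split add0n.
rewrite hP -(mulrA _ _ L) grad_swap hQ !mulrA.
by rewrite -hQ.
Qed.

Lemma dj'_Phi (u : gn) (j : 'I_n) :
  dj' form (fun v : gn => phi (prod_all v)) u (ordS j) = dphi form phi (Tj u j).
Proof.
have jn := ltn_ord j.
rewrite /dj' gradPhi ffunE /dphi TjE.
set k := ordS j.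
set Rk := DpL (Unat u) 0 k.
set Lk := DpL (Unat u) k.+1 (n - k.+1).
have kn := ltn_ord k.
have hP : prod_all u = Lk * u k * Rk.
  rewrite prod_allE -{1}(subnKC kn) DpL_split add0n -mulrA; congr (_ * _).
  by rewrite DpLS add0n UnatE.
have hT : DpL (Unat u) 0 j.+1 * DpL (Unat u) j.+1 (n - j.+1) = Rk * (Lk * u k).
  rewrite /Rk /Lk -UnatE.
  have [jlt|jeq] := ltnP j.+1 n.
    have kv : nat_of_ord k = j.+1 by rewrite /k /= modn_small.
    rewrite kv; congr (_ * _).
    rewrite (_ : (n - j.+1 = 1 + (n - j.+2))%N); last by lia.
    by rewrite DpL_split DpL1 addn1.
  have jeq' : j.+1 = n by apply/eqP; rewrite eqn_leq jn jeq.
  have kv : nat_of_ord k = 0%N by rewrite /k /= jeq' modnn.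
  rewrite kv DpL0 mul1r (_ : (n - j.+1 = 0)%N); last by lia.
  rewrite DpL0 mulr1 (_ : (n - 1 = j)%N); last by lia.
  by rewrite -add1n DpL_split add0n DpL1.
have gs := grad_swap Rk (Lk * u k).
by rewrite hP hT -gs -grad_comm !mulrA.
Qed.


Lemma form_suml (I : Type) (r : seq I) (P : pred I) (F : I -> g) v :
  form (\sum_(i <- r | P i) F i) v = \sum_(i <- r | P i) form (F i) v.
Proof. exact: (@linR_sum _ _ _ _ _ _ (linR_forml v)). Qed.

Lemma formDl x y v : form (x + y) v = form x v + form y v.
Proof. exact: (linRD _ (linR_forml v)). Qed.

Lemma sum_formD (F1 F2 : 'I_n -> g) v :
  form (\sum_j (F1 j + F2 j)) v = \sum_j form (F1 j) v + \sum_j form (F2 j) v.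
Proof. by rewrite form_suml -big_split; apply: eq_bigr => j _; exact: formDl. Qed.

Lemma main_sec (A B C D : 'I_n -> 'I_n -> 'End(g)) (u : gn) (l : gn -> R) : linR l ->
  PB form A B C D (fun v : gn => phi (prod_all v)) l u =
  l [ffun i => u i * (\sum_(j < n) (A i (ordS j) (dphi form phi (Tj u j))
                                  + B i j (dphi form phi (Tj u j))))
             - (\sum_(j < n) (D i j (dphi form phi (Tj u j))
                              + C i (ordS j) (dphi form phi (Tj u j)))) * u i].
Proof.
move=> ll; rewrite -(gradl l u ll) /PB; apply: eq_bigr => i _; rewrite ffunE.
set Phi := fun v : gn => phi (prod_all v).
set Gl := gradn form l u.
set dT := fun j => dphi form phi (Tj u j).
have eA : \sum_j form (A i j (dj' form Phi u j)) (dj' form l u i) =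
          \sum_j form (A i (ordS j) (dT j)) (Gl i * u i).
  by rewrite (reindex_inj (@ordS_inj n)); apply: eq_bigr => j _; rewrite dj'_Phi.
have eC : \sum_j form (C i j (dj' form Phi u j)) (dj form l u i) =
          \sum_j form (C i (ordS j) (dT j)) (u i * Gl i).
  by rewrite (reindex_inj (@ordS_inj n)); apply: eq_bigr => j _; rewrite dj'_Phi.
have eD : \sum_j form (D i j (dj form Phi u j)) (dj form l u i) =
          \sum_j form (D i j (dT j)) (u i * Gl i).
  by apply: eq_bigr => j _; rewrite dj_Phi.
have eB : \sum_j form (B i j (dj form Phi u j)) (dj' form l u i) =
          \sum_j form (B i j (dT j)) (Gl i * u i).
  by apply: eq_bigr => j _; rewrite dj_Phi.
rewrite sumrB big_split /= sumrB eA eB eC eD.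
have fr := linR_formr (Gl i).
rewrite (linRD _ fr) (linRN _ fr).
rewrite -form_inv form_sym (form_sym (Gl i)) form_inv.
rewrite /dT !sum_formD.
by rewrite opprD addrA; congr (_ - _); rewrite addrAC.
Qed.


End PhiSec.

End Alg.

Local Close Scope classical_set_scope.

Theorem proposition6 (R : realType) (g : falgType R) (form : g -> g -> R)
  (form_linl : forall (a : R) (u1 u2 v : g),
      form (a *: u1 + u2) v = a * form u1 v + form u2 v)
  (form_sym : forall u v : g, form u v = form v u)
  (form_nondeg : forall u : g, (forall v : g, form u v = 0) -> u = 0)
  (form_inv : forall u v w : g, form (u * v) w = form u (v * w))
  (n : nat) (A B C D : 'I_n -> 'I_n -> 'End(g))
  (adjA : forall i j (x y : g), form (A i j x) y = - form x (A j i y))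
  (adjD : forall i j (x y : g), form (D i j x) y = - form x (D j i y))
  (adjB : forall i j (x y : g), form (B i j x) y = form x (C j i y))
  (Poisson : is_Poisson form A B C D)
  (phi : g -> R) (phi_smooth : smooth phi) (phi_Ad : Ad_invariant phi) :
  let Phi := fun u : {ffun 'I_n -> g} => phi (prod_all u) in
  let Rc := fun (u : {ffun 'I_n -> g}) (i : 'I_n) =>
    \sum_(j < n) (A i (ordS j) (dphi form phi (Tj u j))
                  + B i j (dphi form phi (Tj u j))) in
  let Lc := fun (u : {ffun 'I_n -> g}) (i : 'I_n) =>
    \sum_(j < n) (D i j (dphi form phi (Tj u j))
                  + C i (ordS j) (dphi form phi (Tj u j))) in
  forall (u : {ffun 'I_n -> g}) (l : {ffun 'I_n -> g} -> R),
    (forall (a : R) (x y : {ffun 'I_n -> g}), l (a *: x + y) = a * l x + l y) ->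
    PB form A B C D Phi l u
      = l [ffun i => u i * Rc u i - Lc u i * u i].
Proof.
move=> Phi Rc Lc u l ll.
exact: (@main_sec R g form form_linl form_sym form_nondeg form_inv phi phi_smooth phi_Ad n A B C D u l ll).
Qed.
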